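(* Let $\kappa>2$. Then the solution $t\mapsto e^{i\kappa t/2}\frac{1}{\sqrt2}(1,1)$ of system (H) is spectrally unstable and orbitally unstable.
   Context: Let $\kappa>0$. System (H) is the ODE system for $u=(u_0,u_1):\mathbb R\to\mathbb C^2$: $i u_0'=u_0-u_1-\kappa|u_0|^2u_0$, $\; i u_1'=u_1-u_0-\kappa|u_1|^2u_1$. Linearization about a solution $e^{i\omega t}U_*$ with $U_*\in\mathbb R^2$: writing $u_j=e^{i\omega t}(U_{*j}+v_j)$ and keeping linear terms gives $i v_j'=(1+\omega-\kappa U_{*j}^2)v_j-v_{1-j}-2\kappa U_{*j}^2\,\mathrm{Re}(v_j)$; with $v_j=q_j+ip_j$ this is $X'=\mathbb LX$ for $X=(q_0,p_0,q_1,p_1)\in\mathbb R^4$, $\mathbb L$ a real $4\times4$ matrix. Spectrally unstable means $\mathbb L$ has an eigenvalue with positive real part. The reference solution is orbitally stable if for every $\epsilon>0$ there is $\delta>0$ such that every solution $u$ of (H) with $|u(0)-U_*|\le\delta$ satisfies $\inf_{\theta\in\mathbb R}|u(t)-e^{i\theta}U_*|\le\epsilon$ for all $t\ge0$; orbitally unstable means not orbitally stable. *)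

(* Defs.v *)
From Stdlib Require Import Reals.
From Coquelicot Require Import Coquelicot.
From mathcomp Require Import all_boot all_algebra.
From mathcomp Require Import Rstruct complex.

Set Implicit Arguments.
Unset Strict Implicit.
Unset Printing Implicit Defensive.

Local Open Scope R_scope.

Definition H_rhs (kappa : R) (a b : C) : C :=
  Cminus (Cminus a b) (Cmult (RtoC (kappa * (Cmod a) ^ 2)) a).

Definition solH (kappa : R) (u0 u1 : R -> C) : Prop :=
  forall t : R,
    (exists d0 : C, is_derive u0 t d0 /\ Cmult Ci d0 = H_rhs kappa (u0 t) (u1 t)) /\
    (exists d1 : C, is_derive u1 t d1 /\ Cmult Ci d1 = H_rhs kappa (u1 t) (u0 t)).

Definition normC2 (a b : C) : R := sqrt (Cmod a ^ 2 + Cmod b ^ 2).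

Definition expi (theta : R) : C := (cos theta, sin theta).

Definition orbit_dist (x0 x1 : C) (U0 U1 : R) : Rbar :=
  Glb_Rbar (fun r => exists theta : R,
    r = normC2 (Cminus x0 (Cmult (expi theta) (RtoC U0)))
               (Cminus x1 (Cmult (expi theta) (RtoC U1)))).

Definition orbitally_stable (kappa U0 U1 : R) : Prop :=
  forall eps : R, 0 < eps -> exists delta : R, 0 < delta /\
    forall u0 u1 : R -> C, solH kappa u0 u1 ->
      normC2 (Cminus (u0 0) (RtoC U0)) (Cminus (u1 0) (RtoC U1)) <= delta ->
      forall t : R, 0 <= t -> Rbar_le (orbit_dist (u0 t) (u1 t) U0 U1) (Rbar.Finite eps).

Definition orbitally_unstable (kappa U0 U1 : R) : Prop :=
  ~ orbitally_stable kappa U0 U1.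

(* i v_j' = (1+omega-kappa U_j^2) v_j - v_{1-j} - 2 kappa U_j^2 Re v_j,
   v_j = q_j + i p_j, X = (q0,p0,q1,p1), X' = L X.  Writing c_j :=
   1+omega-kappa U_j^2 and separating real and imaginary parts:
     q_j' = c_j p_j - p_{1-j},
     p_j' = -(c_j - 2 kappa U_j^2) q_j + q_{1-j}.
   (The lemma Lmx_linearization below checks this against the complex form.) *)
Definition cj (kappa omega Uj : R) : R := 1 + omega - kappa * Uj ^ 2.

Definition Lentry (kappa omega U0 U1 : R) (i j : nat) : R :=
  let c0 := cj kappa omega U0 in
  let c1 := cj kappa omega U1 in
  let d0 := c0 - 2 * kappa * U0 ^ 2 in
  let d1 := c1 - 2 * kappa * U1 ^ 2 in
  match i, j with
  | 0%nat, 1%nat => c0 | 0%nat, 3%nat => -1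
  | 1%nat, 0%nat => - d0 | 1%nat, 2%nat => 1
  | 2%nat, 1%nat => -1 | 2%nat, 3%nat => c1
  | 3%nat, 0%nat => 1 | 3%nat, 2%nat => - d1
  | _, _ => 0
  end.

Definition Lmx (kappa omega U0 U1 : R) : 'M[R]_4 :=
  (\matrix_(i < 4, j < 4) Lentry kappa omega U0 U1 i j)%R.

Lemma Lmx_linearization (kappa omega U0 U1 q0 p0 q1 p1 : R) :
  let v0 : C := (q0, p0) in let v1 : C := (q1, p1) in
  let F (Uj : R) (vj vk : C) : C :=
    Cmult (Copp Ci)
      (Cminus (Cminus (Cmult (RtoC (cj kappa omega Uj)) vj) vk)
              (RtoC (2 * kappa * Uj ^ 2 * fst vj))) in
  let X : 'cV[R]_4 := (\col_(i < 4) [:: q0; p0; q1; p1]`_i)%R in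
  let Y := (Lmx kappa omega U0 U1 *m X)%R in
  (Y (@Ordinal 4 0 isT) ord0, Y (@Ordinal 4 1 isT) ord0) = F U0 v0 v1 /\
  (Y (@Ordinal 4 2 isT) ord0, Y (@Ordinal 4 3 isT) ord0) = F U1 v1 v0.
Proof.
move=> v0 v1 F X Y; rewrite /Y /X /F /v0 /v1.
rewrite !mxE !big_ord_recr !big_ord0 /= !mxE /=.
rewrite /Lentry /cj /Cmult /Cminus /Cplus /Copp /RtoC /Ci /=.
rewrite -?RplusE -?RmultE -?RoppE -?RminusE.
have Z : (0%R : R) = R0 by [].
rewrite ?Z; split; f_equal; ring.
Qed.

Definition spectrally_unstable (L : 'M[R]_4) : Prop :=
  exists (lam : R[i]) (v : 'cV[R[i]]_4),
    (0 < complex.Re lam)%R /\ (v != 0)%R /\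
    (map_mx (fun x : R => (x%:C)%C) L *m v = lam *: v)%R.

(* Main.v *)
Require Import Defs.
From Stdlib Require Import Reals Lra.
From Coquelicot Require Import Coquelicot.
From mathcomp Require Import all_boot all_algebra.
From mathcomp Require Import Rstruct complex.
Import GRing.Theory.
Local Open Scope R_scope.

Lemma is_derive_pair' (f g : R -> R) x a b :
  is_derive f x a -> is_derive g x b -> @is_derive _ _ (fun t => ((f t, g t) : C)) x ((a,b) : C).
Proof.
intros Hf Hg.
unfold is_derive in *.
set (h := fun (u v : R) => ((u, v) : C)).
change (filterdiff (fun y => h (f y) (g y)) (locally x) (fun y => h (scal y a) (scal y b))).
apply (filterdiff_comp_2 f g h (fun y => scal y a) (fun y => scal y b) h Hf Hg).
apply filterdiff_ext_lin with (fun t => t).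
- apply filterdiff_ext with (fun t => t). intros [u v]; reflexivity. apply filterdiff_id.
- intros [u v]; reflexivity.
Qed.

Lemma deriv_form (c1 c2 w : R) (A B : R -> R) (A' B' t : R) :
  is_derive A t A' -> is_derive B t B' ->
  is_derive (fun t => Cmult (c1,c2) (Cmult (expi (w*t)) (A t, B t))) t
    (Cmult (c1,c2) (Cmult (expi (w*t)) (A' - w * B t, B' + w * A t))).
Proof.
intros HA HB.
have EA := is_derive_unique _ _ _ HA.
have EB := is_derive_unique _ _ _ HB.
have XA : ex_derive A t by eexists; exact HA.
have XB : ex_derive B t by eexists; exact HB.
unfold Cmult, expi; simpl.
apply is_derive_pair'; auto_derive; auto; rewrite EA EB; ring.
Qed.

Definition Af (s sg E : R) := 1 + sg * s * E / (E^2+1).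
Definition Bf (s E : R) := s/2 * (E^2-1)/(E^2+1).
Definition dAf (s sg E : R) := sg*s^2*E*(1-E^2)/(E^2+1)^2.
Definition dBf (s E : R) := 2*s^2*E^2/(E^2+1)^2.

Lemma dA (s sg eps t : R) :
  is_derive (fun t => Af s sg (eps * exp (s*t))) t (dAf s sg (eps * exp (s*t))).
Proof.
unfold Af, dAf. set (E := eps * exp (s*t)).
assert (HE : E^2+1 <> 0) by (apply Rgt_not_eq; nra).
auto_derive. unfold E in HE. auto.
unfold E in *. field. auto.
Qed.

Lemma dB (s eps t : R) :
  is_derive (fun t => Bf s (eps * exp (s*t))) t (dBf s (eps * exp (s*t))).
Proof.
unfold Bf, dBf. set (E := eps * exp (s*t)).
assert (HE : E^2+1 <> 0) by (apply Rgt_not_eq; nra).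
auto_derive. unfold E in HE. auto.
unfold E in *. field. auto.
Qed.

Lemma inner (s sg E kap : R) : kap = 2 + s^2/2 -> (sg = 1 \/ sg = -1) ->
  let a0 := Af s sg E in let b0 := Bf s E in let a1 := Af s (-sg) E in
  let N := a0^2 + b0^2 in
  dAf s sg E - kap/2 * b0 = b0 - b0 - N*b0 /\
  dBf s E + kap/2 * a0 = -(a0 - a1 - N*a0).
Proof.
intros Hk Hsg a0 b0 a1 N. unfold N, a0, b0, a1, Af, Bf, dAf, dBf.
assert (HE : E^2+1 <> 0) by (apply Rgt_not_eq; nra).
subst kap. destruct Hsg as [->| ->]; split; field; auto.
Qed.

Lemma Cmod_sq (z : C) : Cmod z ^ 2 = fst z ^ 2 + snd z ^ 2.
Proof.
unfold Cmod. rewrite pow2_sqrt; [ring|]. destruct z; simpl; nra.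
Qed.

Lemma ode_alg c1 c2 co si a0 b0 a1 b1 kap :
 kap * (c1^2+c2^2) = 1 -> co^2+si^2 = 1 ->
 let N := a0^2+b0^2 in
 Cmult Ci (Cmult (c1,c2) (Cmult (co,si) (b0 - b1 - N*b0, -(a0 - a1 - N*a0)))) =
 H_rhs kap (Cmult (c1,c2) (Cmult (co,si) (a0,b0))) (Cmult (c1,c2) (Cmult (co,si) (a1,b1))).
Proof.
intros Hc He N. unfold H_rhs. rewrite Cmod_sq.
set (z := Cmult (c1,c2) (Cmult (co,si) (a0,b0))).
assert (Hz : kap * (fst z ^ 2 + snd z ^ 2) = N).
{ unfold z, N, Cmult; simpl.
  transitivity (kap * (c1^2+c2^2) * (co^2+si^2) * (a0^2+b0^2)); [ring|].
  rewrite Hc He; ring. }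
rewrite Hz. unfold z, Cmult, Cminus, Cplus, Copp, RtoC, Ci; simpl. f_equal; ring.
Qed.

Definition sK (kap : R) := sqrt (2*(kap-2)).
Definition cc (kap : R) : C := (2/(sqrt 2*kap), sK kap/(sqrt 2*kap)).
Definition uu (kap eps sg : R) (t : R) : C :=
  Cmult (cc kap) (Cmult (expi (kap/2*t)) (Af (sK kap) sg (eps*exp(sK kap*t)), Bf (sK kap) (eps*exp(sK kap*t)))).

Lemma sK_sq kap : 2 < kap -> sK kap ^ 2 = 2*(kap-2).
Proof. intros; unfold sK; rewrite pow2_sqrt; lra. Qed.

Lemma sqrt2_sq : sqrt 2 ^ 2 = 2.
Proof. rewrite pow2_sqrt; lra. Qed.

Lemma cc_norm kap : 2 < kap -> kap * (fst (cc kap) ^2 + snd (cc kap) ^2) = 1.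
Proof.
intros hk. unfold cc; simpl.
assert (h2 : sqrt 2 <> 0) by (apply Rgt_not_eq, sqrt_lt_R0; lra).
transitivity (kap * (4 + sK kap ^2) / (sqrt 2 ^2 * kap^2)).
field; split; lra.
rewrite sK_sq // sqrt2_sq. field; lra.
Qed.

Lemma sol_ok kap eps : 2 < kap -> solH kap (uu kap eps 1) (uu kap eps (-1)).
Proof.
intros hk t.
assert (Hkap : kap = 2 + sK kap ^ 2 / 2) by (rewrite sK_sq //; lra).
have Hc := cc_norm kap hk.
assert (He : cos (kap/2*t) ^2 + sin (kap/2*t) ^2 = 1) by (rewrite <- (sin2_cos2 (kap/2*t)); unfold Rsqr; ring).
destruct (cc kap) as [c1 c2] eqn:Ec. cbn [fst snd] in Hc.
split; eexists; split.
- unfold uu; rewrite Ec. apply deriv_form; [apply dA | apply dB].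
- destruct (inner (sK kap) 1 (eps * exp (sK kap * t)) kap Hkap (or_introl (Logic.eq_refl _))) as [H1 H2].
  rewrite H1 H2. unfold uu; rewrite Ec. unfold expi. apply ode_alg; auto.
- unfold uu; rewrite Ec. apply deriv_form; [apply dA | apply dB].
- destruct (inner (sK kap) (-1) (eps * exp (sK kap * t)) kap Hkap (or_intror (Logic.eq_refl _))) as [H1 H2].
  rewrite H1 H2 Ropp_involutive. unfold uu; rewrite Ec. unfold expi. apply ode_alg; auto.
Qed.

Lemma diff_sq c1 c2 co si a0 b0 a1 b1 :
  let z := Cminus (Cmult (c1,c2) (Cmult (co,si) (a0,b0))) (Cmult (c1,c2) (Cmult (co,si) (a1,b1))) in
  fst z ^2 + snd z ^2 = (c1^2+c2^2)*(co^2+si^2)*((a0-a1)^2+(b0-b1)^2).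
Proof. unfold Cminus, Cmult, Cplus, Copp; simpl; ring. Qed.

Lemma normC2_lb (z0 z1 w : C) :
  normC2 (Cminus z0 w) (Cminus z1 w) ^ 2 >= (fst (Cminus z0 z1) ^2 + snd (Cminus z0 z1) ^2) / 2.
Proof.
unfold normC2. rewrite pow2_sqrt; [| rewrite !Cmod_sq; nra].
rewrite !Cmod_sq. destruct z0 as [p q], z1 as [p1 q1], w as [wp wq]. unfold Cminus, Cplus, Copp; simpl.
have h1 := pow2_ge_0 (p + p1 - 2*wp). have h2 := pow2_ge_0 (q + q1 - 2*wq). nra.
Qed.

Lemma U_eq kap : 2 < kap ->
  RtoC (/ sqrt 2) = Cmult (cc kap) (Cmult (1,0) (1, - sK kap / 2)).
Proof.
intros hk. unfold cc, RtoC, Cmult; simpl.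
assert (h2 : sqrt 2 <> 0) by (apply Rgt_not_eq, sqrt_lt_R0; lra).
have hs := sK_sq kap hk.
f_equal.
- transitivity ((4 + sK kap ^ 2) / (2 * sqrt 2 * kap)). rewrite hs. field; split; lra.
  field; split; lra.
- field; split; lra.
Qed.

Lemma orb_unstable kap : 2 < kap -> orbitally_unstable kap (/ sqrt 2) (/ sqrt 2).
Proof.
intros hk Hst.
set (s := sK kap).
assert (hs : 0 < s) by (unfold s, sK; apply sqrt_lt_R0; lra).
have hs2 := sK_sq kap hk. fold s in hs2.
have Hc := cc_norm kap hk.
destruct (Hst (s/(4*kap))) as [delta [Hd Hall]].
{ apply Rdiv_lt_0_compat; lra. }
set (eps := Rmin 1 (delta/2)).
assert (he0 : 0 < eps) by (unfold eps; apply Rmin_pos; lra).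
assert (he1 : eps <= 1) by (unfold eps; apply Rmin_l).
assert (he2 : eps <= delta/2) by (unfold eps; apply Rmin_r).
set (ts := - ln eps / s).
assert (hts : 0 <= ts).
{ unfold ts. have : ln eps <= 0.
  { rewrite <- ln_1. destruct (Req_dec eps 1) as [->|hne]; [lra|]. left; apply ln_increasing; lra. }
  intro; apply Rmult_le_pos; [lra | left; apply Rinv_0_lt_compat; lra]. }
have Hd0 := Hall (uu kap eps 1) (uu kap eps (-1)) (sol_ok kap eps hk).
assert (Hinit : normC2 (Cminus (uu kap eps 1 0) (RtoC (/ sqrt 2)))
                       (Cminus (uu kap eps (-1) 0) (RtoC (/ sqrt 2))) <= delta).
{ rewrite (U_eq kap hk).
  unfold uu. rewrite Rmult_0_r Rmult_0_r exp_0 Rmult_1_r.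
  replace (expi 0) with ((1,0) : C) by (unfold expi; rewrite cos_0 sin_0; reflexivity).
  destruct (cc kap) as [c1 c2] eqn:Ec. cbn [fst snd] in Hc.
  unfold normC2. rewrite !Cmod_sq !diff_sq.
  fold s.
  assert (HX : 2 * (c1 ^ 2 + c2 ^ 2) * (s^2 * (eps^2/(eps^2+1))) <= delta^2).
  { assert (hc' : c1 ^ 2 + c2 ^ 2 = / kap) by (field_simplify_eq; [lra|lra]).
    rewrite hc' hs2.
    assert (h3 : eps^2/(eps^2+1) <= eps^2).
    { apply Rmult_le_reg_r with (eps^2+1); [nra|]. field_simplify; [nra| nra]. }
    assert (h4 : 2 * / kap * (2 * (kap - 2)) <= 4).
    { apply Rmult_le_reg_r with kap; [lra|]. field_simplify; lra. }
    assert (h5 : 0 <= eps ^ 2 / (eps ^ 2 + 1)) by (apply Rdiv_le_0_compat; nra).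
    assert (h6 : 0 <= 2 * / kap * (2 * (kap - 2))).
    { apply Rmult_le_pos; [|lra]. apply Rmult_le_pos; [lra|left; apply Rinv_0_lt_compat; lra]. }
    nra. }
  rewrite <- (sqrt_pow2 delta); [|lra]. apply sqrt_le_1_alt.
  refine (Rle_trans _ _ _ (Req_le _ _ _) HX).
  unfold Af, Bf. field. nra. }
have Hd1 := Hd0 Hinit ts hts.
assert (HE : eps * exp (s * ts) = 1).
{ unfold ts. replace (s * (- ln eps / s)) with (- ln eps) by (field; lra).
  rewrite exp_Ropp exp_ln; [field|]; lra. }
set (l := s / (2*kap)).
assert (Hlb : Rbar_le (Rbar.Finite l) (orbit_dist (uu kap eps 1 ts) (uu kap eps (-1) ts) (/ sqrt 2) (/ sqrt 2))).
{ unfold orbit_dist. destruct (Glb_Rbar_correct (fun r => exists theta : R,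
    r = normC2 (Cminus (uu kap eps 1 ts) (Cmult (expi theta) (RtoC (/ sqrt 2))))
               (Cminus (uu kap eps (-1) ts) (Cmult (expi theta) (RtoC (/ sqrt 2)))))) as [_ Hg].
  apply Hg. intros r [th ->]. simpl.
  have H := normC2_lb (uu kap eps 1 ts) (uu kap eps (-1) ts) (Cmult (expi th) (RtoC (/ sqrt 2))).
  assert (HQ : fst (Cminus (uu kap eps 1 ts) (uu kap eps (-1) ts)) ^2 + snd (Cminus (uu kap eps 1 ts) (uu kap eps (-1) ts)) ^2 = s^2/kap).
  { unfold uu. fold s. rewrite HE.
    destruct (cc kap) as [c1 c2] eqn:Ec. cbn [fst snd] in Hc. unfold expi.
    rewrite diff_sq.
    assert (He : cos (kap/2*ts) ^2 + sin (kap/2*ts) ^2 = 1) by (rewrite <- (sin2_cos2 (kap/2*ts)); unfold Rsqr; ring).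
    rewrite He. unfold Af, Bf.
    assert (hc' : c1 ^ 2 + c2 ^ 2 = / kap) by (field_simplify_eq; [lra|lra]).
    rewrite hc'. field. lra. }
  rewrite HQ in H.
  assert (hr : 0 <= normC2 (Cminus (uu kap eps 1 ts) (Cmult (expi th) (RtoC (/ sqrt 2)))) (Cminus (uu kap eps (-1) ts) (Cmult (expi th) (RtoC (/ sqrt 2))))) by apply sqrt_pos.
  revert H hr. generalize (normC2 (Cminus (uu kap eps 1 ts) (Cmult (expi th) (RtoC (/ sqrt 2)))) (Cminus (uu kap eps (-1) ts) (Cmult (expi th) (RtoC (/ sqrt 2))))).
  intros r H hr.
  assert (hl2 : l ^ 2 <= s^2/kap/2).
  { unfold l. apply Rmult_le_reg_r with (4*kap^2); [nra|]. field_simplify; [|lra|lra]. nra. }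
  assert (hl : 0 < l) by (unfold l; apply Rdiv_lt_0_compat; lra).
  simpl. destruct (Rle_lt_dec l r) as [ok|bad]; [exact ok|]. exfalso. assert (r^2 < l^2) by nra. lra. }
have Ht := Rbar_le_trans _ _ _ Hlb Hd1. simpl in Ht.
unfold l in Ht. assert (s / (2*kap) > s / (4*kap)).
{ apply Rmult_lt_reg_r with (4*kap); [lra|]. field_simplify; lra. }
lra.
Qed.

Lemma spec kap : 2 < kap -> spectrally_unstable (Lmx kap (kap/2) (/sqrt 2) (/sqrt 2)).
Proof.
intros hk.
set (s := sK kap).
assert (hs : 0 < s) by (unfold s, sK; apply sqrt_lt_R0; lra).
have hs2 := sK_sq kap hk. fold s in hs2.
pose vr : 'cV[R]_4 := (\col_(i < 4) [:: 1; s/2; -1; -s/2]`_i)%R.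
exists ((s%:C)%C), (map_mx (real_complex R) vr).
split; [simpl; exact/RltP|].
split.
- apply/negP => /eqP /matrixP /(_ ord0 ord0). rewrite !mxE /=.
  move/eqP. rewrite eq_complex /= oner_eq0 //.
- change (map_mx (fun x : R => (x%:C)%C) (Lmx kap (kap / 2) (/ sqrt 2) (/ sqrt 2)))
    with (map_mx (real_complex R) (Lmx kap (kap / 2) (/ sqrt 2) (/ sqrt 2))).
  rewrite -map_mxM. apply/matrixP => i j. rewrite !mxE -rmorphM. congr (_%:C)%C.
  rewrite !big_ord_recr big_ord0 /= !mxE /=.
  have hq : (/ sqrt 2) ^ 2 = / 2.
  { rewrite pow_inv pow2_sqrt; lra. }
  case: i => [[|[|[|[|i]]]] Hi] //=; rewrite /Lentry /cj hq;
  rewrite -?RplusE -?RmultE -?RoppE -?RminusE -?RdivE; try (have Z : (0%R : R) = R0 by []; rewrite ?Z);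
  rewrite /GRing.inv /=;
  rewrite -?[(1%R : R)]/1 -?[(2%R : R)]/2;
  idtac.
  all: have hq2 : / sqrt 2 * (/ sqrt 2 * 1) = / 2 by rewrite -hq /=; ring.
  all: rewrite ?hq2; clearbody s; have hk' : kap = 2 + s*s/2 by (have -> : s*s = s^2 by ring); rewrite hs2; field.
  all: rewrite hk'; field.
Qed.

Theorem mainTheorem2 (kappa : R) (hkappa : Rlt 2 kappa) :
  spectrally_unstable (Lmx kappa (kappa / 2) (/ sqrt 2) (/ sqrt 2)) /\
  orbitally_unstable kappa (/ sqrt 2) (/ sqrt 2).
Proof.
split; [exact (spec kappa hkappa) | exact (orb_unstable kappa hkappa)].
Qed.
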